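(* Let $\widehat{T}=\begin{bmatrix}\hat t_{11}&\hat t_{12}\\0&\hat t_{22}\end{bmatrix}$ be a real matrix with $\hat t_{11}>0$, $\hat t_{12}\ge 0$, $\hat t_{22}\ge 0$ and $\hat t_{11}^2\ge \hat t_{12}^2+\hat t_{22}^2$. Put $x=\hat t_{12}/\hat t_{11}$, $y=\hat t_{22}/\hat t_{11}$, and assume $x\neq 1$. Define $$\tan(2\varphi)=\frac{-2xy}{(y-x)(y+x)+1},\qquad \tan\varphi=\frac{\tan(2\varphi)}{1+\sqrt{1+\tan^2(2\varphi)}},\qquad \cos\varphi=\frac{1}{\sqrt{1+\tan^2\varphi}},\quad \sin\varphi=\tan\varphi\cos\varphi,$$ $$\tanh\psi=-(x+y\tan\varphi).$$ Then the denominator of $\tan(2\varphi)$ is positive, $-1<\tan\varphi\le 0$, and $|\tanh\psi|<1$; hence $\cosh\psi=1/\sqrt{1-\tanh^2\psi}$ and $\sinh\psi=\tanh\psi\cosh\psi$ are well defined, and $$\begin{bmatrix}\cos\varphi&\sin\varphi\\-\sin\varphi&\cos\varphi\end{bmatrix}\widehat{T}\begin{bmatrix}\cosh\psi&\sinh\psi\\\sinh\psi&\cosh\psi\end{bmatrix}=\begin{bmatrix}\tilde\sigma_{11}'&0\\0&\tilde\sigma_{22}'\end{bmatrix},\qquad \tilde\sigma_{11}'=\frac{\cos\varphi}{\cosh\psi}\hat t_{11},\quad \tilde\sigma_{22}'=\frac{\cosh\psi}{\cos\varphi}\hat t_{22}.$$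
   Context: The left factor is a plane rotation (orthogonal) and the right factor is a hyperbolic rotation, which is $\widehat{J}$-orthogonal for $\widehat{J}=\mathrm{diag}(1,-1)$ or $\mathrm{diag}(-1,1)$ (i.e. $\widehat V^T\widehat J\widehat V=\widehat J$). This is the $2\times 2$ hyperbolic SVD of $\widehat T$ in the hyperbolic (indefinite $\widehat J$) case with $\widehat T$ upper triangular. *)

(* Defs.v *)
From HB Require Import structures.
From mathcomp Require Import all_boot all_order all_algebra.
Set Implicit Arguments. Unset Strict Implicit. Unset Printing Implicit Defensive.
Import Order.TTheory GRing.Theory Num.Theory.
Local Open Scope ring_scope.

Definition mx22 (R : nzRingType) (a b c d : R) : 'M[R]_2 :=
  \matrix_(i < 2, j < 2)
    if (val i == 0)%N then (if (val j == 0)%N then a else b)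
    else (if (val j == 0)%N then c else d).

(* Main.v *)
Require Import Defs.
From HB Require Import structures.
From mathcomp Require Import all_boot all_order all_algebra.
From mathcomp Require Import ring lra.
Import Order.TTheory GRing.Theory Num.Theory.
Local Open Scope ring_scope.

Lemma mx22_prod3 (R : comNzRingType) (a b c d e f g h k l m n : R) :
  mx22 a b c d *m mx22 e f g h *m mx22 k l m n =
  mx22 ((a * e + b * g) * k + (a * f + b * h) * m) ((a * e + b * g) * l + (a * f + b * h) * n)
       ((c * e + d * g) * k + (c * f + d * h) * m) ((c * e + d * g) * l + (c * f + d * h) * n).
Proof.
apply/matrixP => i j; rewrite !mxE !big_ord_recr !big_ord0 /= !add0r !mxE.
rewrite !big_ord_recr !big_ord0 /= !add0r !mxE /=.
by case: i => [[|[|i]] Hi] //=; case: j => [[|[|j]] Hj].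
Qed.

Theorem theorem2p2 (R : rcfType) (t11 t12 t22 : R) :
  0 < t11 -> 0 <= t12 -> 0 <= t22 -> t12 ^+ 2 + t22 ^+ 2 <= t11 ^+ 2 ->
  let x := t12 / t11 in
  let y := t22 / t11 in
  x != 1 ->
  let tan2phi := (- 2 * x * y) / ((y - x) * (y + x) + 1) in
  let tanphi := tan2phi / (1 + Num.sqrt (1 + tan2phi ^+ 2)) in
  let cosphi := 1 / Num.sqrt (1 + tanphi ^+ 2) in
  let sinphi := tanphi * cosphi in
  let tanhpsi := - (x + y * tanphi) in
  let coshpsi := 1 / Num.sqrt (1 - tanhpsi ^+ 2) in
  let sinhpsi := tanhpsi * coshpsi in
  [/\ 0 < (y - x) * (y + x) + 1,
      - 1 < tanphi <= 0,
      `|tanhpsi| < 1 &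
      mx22 cosphi sinphi (- sinphi) cosphi *m mx22 t11 t12 0 t22
        *m mx22 coshpsi sinhpsi sinhpsi coshpsi
      = mx22 (cosphi / coshpsi * t11) 0 0 (coshpsi / cosphi * t22)].
Proof.
move=> h11 h12 h22 hsq x y hx1 t2 t c s h C S.
have t11n : t11 != 0 by rewrite gt_eqF.
have ex : t12 = x * t11 by rewrite /x mulfVK.
have ey : t22 = y * t11 by rewrite /y mulfVK.
have x0 : 0 <= x by rewrite /x divr_ge0 // ltW.
have y0 : 0 <= y by rewrite /y divr_ge0 // ltW.
have hxy : x ^+ 2 + y ^+ 2 <= 1.
  rewrite ex ey in hsq.
  have : t11 ^+ 2 * (x ^+ 2 + y ^+ 2) <= t11 ^+ 2 * 1 by rewrite mulr1; move: hsq; rewrite !exprMn; lra.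
  by rewrite ler_pM2l // exprn_gt0.
have xl1 : x < 1.
  rewrite lt_neqAle hx1 /=. nra.
have hD : 0 < (y - x) * (y + x) + 1 by nra.
pose D := (y - x) * (y + x) + 1.
have hD' : 0 < D := hD.
have Dn : D != 0 by rewrite gt_eqF.
have et2 : t2 * D = - 2 * x * y by rewrite /t2 mulfVK.
have t2le : t2 <= 0 by nra.
pose sq := Num.sqrt (1 + t2 ^+ 2).
have sq0 : 0 <= sq by rewrite sqrtr_ge0.
have sq2 : sq ^+ 2 = 1 + t2 ^+ 2 by rewrite sqr_sqrtr // addr_ge0 // sqr_ge0.
have sqp : 1 + sq != 0 by rewrite gt_eqF //; lra.
have et : t * (1 + sq) = t2 by rewrite /t mulfVK.
have tle : t <= 0 by nra.
have st : - t2 < sq by nra.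
have tgt : -1 < t.
  have : 0 < (t + 1) * (1 + sq) by rewrite mulrDl et; lra.
  rewrite pmulr_lgt0; [lra | lra].
have key : 2 * t = t2 * (1 - t ^+ 2).
  have : t2 * t = sq - 1 by nra.
  nra.
have keyD : t * D = - (x * y * (1 - t ^+ 2)).
  apply: (mulfI (_ : (2 : R) != 0)); first by rewrite pnatr_eq0.
  rewrite mulrA key.
  have -> : t2 * (1 - t ^+ 2) * D = (t2 * D) * (1 - t ^+ 2) by ring.
  rewrite et2; ring.
have hh : h ^+ 2 < 1.
  rewrite /h sqrrN. 
  have : - 1 < x + y * t < 1 by apply/andP; split; nra.
  case/andP=> ??. nra.
split => //.
- by rewrite tle andbT.
- by rewrite ltr_norml; apply/andP; split; nra.
have q0 : 0 < 1 + t ^+ 2 by rewrite ltr_pwDl // sqr_ge0.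
have c0 : 0 < c by rewrite /c div1r invr_gt0 sqrtr_gt0.
have c2 : c ^+ 2 * (1 + t ^+ 2) = 1.
  by rewrite /c expr_div_n sqr_sqrtr ?ltW // expr1n div1r mulVf // gt_eqF.
have Q0 : 0 < 1 - h ^+ 2 by lra.
have C0 : 0 < C by rewrite /C div1r invr_gt0 sqrtr_gt0.
have C2 : C ^+ 2 * (1 - h ^+ 2) = 1.
  by rewrite /C expr_div_n sqr_sqrtr ?ltW // expr1n div1r mulVf // gt_eqF.
have cn : c != 0 by rewrite gt_eqF.
have Cn : C != 0 by rewrite gt_eqF.
have iC : C^-1 = C * (1 - h ^+ 2).
  by apply: (mulfI Cn); rewrite mulfV // mulrA -expr2 C2.
have ic : c^-1 = c * (1 + t ^+ 2).
  by apply: (mulfI cn); rewrite mulfV // mulrA -expr2 c2.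
have eS : S = h * C by [].
have es : s = t * c by [].
have eh : h = - (x + y * t) by [].
have eD : D = (y - x) * (y + x) + 1 by [].
clearbody S s C c h t D x y.
subst t12 t22 S s h D.
rewrite mx22_prod3; congr (mx22 _ _ _ _).
- rewrite iC; ring.
- ring.
- have -> : (- (t * c) * t11 + c * 0) * C + (- (t * c) * (x * t11) + c * (y * t11)) * (- (x + y * t) * C)
    = - c * C * t11 * (x * y * (1 - t ^+ 2) + t * ((y - x) * (y + x) + 1)) by ring.
  rewrite keyD; ring.
- rewrite ic; ring.
Qed.
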